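(* For every $N\ge1$, the symmetric matrix $$\bar A*\hat{\mathcal{H}}'+\frac{1}{\max(N-1,1)}\big(N\bar A'-\bar A\big)*(\hat{\mathcal{H}}''-\hat{\mathcal{H}}')$$ is positive semi-definite.
   Context: Fix layer widths $C_0,\dots,C_L$ and a mini-batch size $N\ge1$. For $l=1,\dots,L$, let $\bar a_{l-1}\in\mathbb{R}^{(C_{l-1}+1)\times N}$ be square-integrable random matrices (activations with a row of ones appended). For each $n\in\{1,\dots,N\}$ and $l\in\{1,\dots,L\}$, let $g^{(n)}_l\in\mathbb{R}^{C_l\times N}$ be square-integrable random matrices. Here $(g^{(n)}_l)_{a,m}$ stands for the gradient $\partial\mathcal{L}_n/\partial(h_l)_{a,m}$ of the $n$-th example's loss with respect to the pre-activation entry $(a,m)$ of layer $l$. $\mathbb{E}$ denotes expectation, and $\mathbb{E}_n[\cdot]=\frac1N\sum_{n=1}^N[\cdot]$. Define block matrices, with $\{M\}_{l,l'}$ denoting block $(l,l')$, by: - $(\{\bar A\}_{l,l'})_{b,d}=\mathbb{E}\big[\mathbb{E}_n[(\bar a_{l-1})_{b,n}(\bar a_{l'-1})_{d,n}]\big]$; - $(\{\bar A'\}_{l,l'})_{b,d}=\mathbb{E}\big[\mathbb{E}_n[(\bar a_{l-1})_{b,n}]\,\mathbb{E}_n[(\bar a_{l'-1})_{d,n}]\big]$; - $(\{\hat{\mathcal{H}}'\}_{l,l'})_{a,c}=\mathbb{E}\big[\mathbb{E}_n[\sum_{m}(g^{(n)}_l)_{a,m}(g^{(n)}_{l'})_{c,m}]\big]$;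 - $(\{\hat{\mathcal{H}}''\}_{l,l'})_{a,c}=\mathbb{E}\big[\mathbb{E}_n[(\sum_{m}(g^{(n)}_l)_{a,m})(\sum_{m}(g^{(n)}_{l'})_{c,m})]\big]$. For block matrices $P,Q$ with the same block layout, the Khatri–Rao product $P*Q$ is the block matrix with blocks $\{P*Q\}_{l,l'}=\{P\}_{l,l'}\otimes\{Q\}_{l,l'}$, where $\otimes$ is the Kronecker product. *)

(* Defs.v *)
From HB Require Import structures.
From mathcomp Require Import all_boot all_order all_algebra.
From mathcomp Require Import all_classical all_reals all_analysis.
From mathcomp.real_closed Require Export mxtens.
Set Implicit Arguments. Unset Strict Implicit. Unset Printing Implicit Defensive.
Import Order.TTheory GRing.Theory Num.Theory.
Local Open Scope ring_scope.

Section Defs.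
Context {d : measure_display} {T : measurableType d} {R : realType}
  (P : probability T R).

Definition Ex (f : T -> R) : R := Rintegral P setT f.

Definition sq_integrable (f : T -> R) : Prop :=
  measurable_fun setT f /\ P.-integrable setT (fun w => (f w ^+ 2)%:E).

Definition sq_integrable_mx (m n : nat) (X : T -> 'M[R]_(m, n)) : Prop :=
  forall i j, sq_integrable (fun w => X w i j).

(* Layers are indexed by l : 'I_L, standing for the paper's layer l+1.
   C : nat -> nat gives the widths C_0, ..., C_L.
   a l : activation abar_{l} (paper: abar_{(l+1)-1}), size (C l + 1) x N.
   g n l : gradient g^{(n)}_{l+1}, size C (l+1) x N. *)
Variables (L N : nat) (C : nat -> nat)
  (a : forall l : 'I_L, T -> 'M[R]_(C l + 1, N))
  (g : 'I_N -> forall l : 'I_L, T -> 'M[R]_(C l.+1, N)).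

Definition EnN (F : 'I_N -> R) : R := N%:R^-1 * \sum_(n < N) F n.

Definition Abar_blk (l l' : 'I_L) : 'M[R]_(C l + 1, C l' + 1) :=
  \matrix_(b, d') Ex (fun w => EnN (fun n => a l w b n * a l' w d' n)).

Definition Abar'_blk (l l' : 'I_L) : 'M[R]_(C l + 1, C l' + 1) :=
  \matrix_(b, d') Ex (fun w => EnN (fun n => a l w b n) * EnN (fun n => a l' w d' n)).

Definition H'_blk (l l' : 'I_L) : 'M[R]_(C l.+1, C l'.+1) :=
  \matrix_(i, c) Ex (fun w => EnN (fun n => \sum_(m < N) g n l w i m * g n l' w c m)).

Definition H''_blk (l l' : 'I_L) : 'M[R]_(C l.+1, C l'.+1) :=
  \matrix_(i, c) Ex (fun w => EnN (fun n =>
     (\sum_(m < N) g n l w i m) * (\sum_(m < N) g n l' w c m))).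

Definition khatri_rao (p q : 'I_L -> nat)
  (X : forall l l' : 'I_L, 'M[R]_(p l, p l'))
  (Y : forall l l' : 'I_L, 'M[R]_(q l, q l')) :
  'M[R]_(\sum_(l < L) (p l * q l)%N, \sum_(l < L) (p l * q l)%N) :=
  \mxblock_(l < L, l' < L) tensmx (X l l') (Y l l').

Definition theorem3_matrix :=
  khatri_rao Abar_blk H'_blk
  + (maxn (N - 1) 1)%:R^-1 *:
    khatri_rao (fun l l' => N%:R *: Abar'_blk l l' - Abar_blk l l')
               (fun l l' => H''_blk l l' - H'_blk l l').
End Defs.

Definition psd (R : realType) (n : nat) (M : 'M[R]_n) : Prop :=
  M^T = M /\ forall x : 'cV[R]_n, 0 <= (x^T *m M *m x) 0 0.

(* Main.v *)
Require Import Defs.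
From HB Require Import structures.
From mathcomp Require Import all_boot all_order all_algebra.
From mathcomp Require Import all_classical all_reals all_analysis.
From mathcomp.real_closed Require Import mxtens.
From mathcomp Require Import measurable_realfun.
From mathcomp Require Import ring lra.
Import Order.TTheory GRing.Theory Num.Theory.
Local Open Scope ring_scope.
Section S.
Context {d : measure_display} {T : measurableType d} {R : realType} (P : probability T R).
Definition L2 (f : T -> R) := f \in Lfun P 2%:E.
Lemma sq_L2 f : sq_integrable P f -> L2 f.
Proof.
move=> [mf /integrableP [_ hi]].
apply/andP; split; first by rewrite inE.
rewrite inE /= /finite_norm unlock /Lnorm. apply: poweR_lty.
suff -> : (fun x => `|(EFin \o f) x| `^ 2)%E = (fun x => `|(f x ^+ 2)%:E|)%E by [].
apply/funext => x /=. congr (_%:E).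
by rewrite -[2]/(2%:R) powR_mulrn // real_normK ?num_real // ger0_norm // sqr_ge0.
Qed.
Lemma p12 : (1 <= 2%:E :> \bar R)%E. Proof. by rewrite lee_fin ler1n. Qed.
Lemma L2lin (c : R) (f g : T -> R) : L2 f -> L2 g -> L2 (fun w => c * f w + g w).
Proof. move=> hf hg. have [_ H] := Lfun_submod_closed P p12.
have := H c f g hf hg. rewrite /L2. congr (_ \in _). Qed.
Lemma L20 : L2 (fun _ => 0).
Proof. have [H _] := Lfun_submod_closed P p12. exact: H. Qed.
Definition Int (f : T -> R) := P.-integrable setT (EFin \o f).
Lemma L2M f g : L2 f -> L2 g -> Int (fun w => f w * g w).
Proof. move=> hf hg. apply/Lfun1_integrable. exact: Lfun2_mul_Lfun1. Qed.
Lemma IntD f g : Int f -> Int g -> Int (fun w => f w + g w).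
Proof. move=> hf hg; rewrite /Int.
suff -> : EFin \o (fun w => f w + g w) = ((EFin \o f) \+ (EFin \o g))%E by exact: integrableD.
by apply/funext => x; rewrite /= EFinD. Qed.
Lemma IntZ c f : Int f -> Int (fun w => c * f w).
Proof. move=> hf; rewrite /Int.
suff -> : EFin \o (fun w => c * f w) = (fun w => c%:E * (EFin \o f) w)%E by exact: integrableZl.
by apply/funext => x; rewrite /= EFinM. Qed.
Lemma Int0 : Int (fun _ => 0).
Proof. exact: integrable0. Qed.
Lemma Ex_ext f g : (forall w, f w = g w) -> Ex P f = Ex P g.
Proof. by move=> h; congr (Ex P _); apply/funext. Qed.
Lemma ExD f g : Int f -> Int g -> Ex P (fun w => f w + g w) = Ex P f + Ex P g.
Proof. by move=> hf hg; rewrite /Ex RintegralD. Qed.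
Lemma ExZ c f : Int f -> Ex P (fun w => c * f w) = c * Ex P f.
Proof. by move=> hf; rewrite /Ex RintegralZl. Qed.
Lemma ExB f g : Int f -> Int g -> Ex P (fun w => f w - g w) = Ex P f - Ex P g.
Proof. by move=> hf hg; rewrite /Ex RintegralB. Qed.
Lemma Ex0 : Ex P (fun _ => 0) = 0.
Proof. by rewrite /Ex Rintegral_cst ?mul0r. Qed.
Lemma Ex_ge0 f : (forall w, 0 <= f w) -> 0 <= Ex P f.
Proof. by move=> h; apply: Rintegral_ge0. Qed.
Lemma Int_sum (I : Type) (r : seq I) (F : I -> T -> R) : (forall i, Int (F i)) ->
  Int (fun w => \sum_(i <- r) F i w).
Proof.
move=> h; elim: r => [|i r IH].
  have -> : (fun w => \sum_(i <- [::]) F i w) = (fun _ => 0) by apply/funext => w; rewrite big_nil.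
  exact: Int0.
have -> : (fun w => \sum_(j <- i :: r) F j w) = (fun w => F i w + \sum_(j <- r) F j w).
  by apply/funext => w; rewrite big_cons.
exact: IntD.
Qed.
Lemma Ex_sum (I : Type) (r : seq I) (F : I -> T -> R) : (forall i, Int (F i)) ->
  Ex P (fun w => \sum_(i <- r) F i w) = \sum_(i <- r) Ex P (F i).
Proof.
move=> h; elim: r => [|i r IH].
  rewrite big_nil; transitivity (Ex P (fun _ => 0)); last exact: Ex0.
  by apply: Ex_ext => w; rewrite big_nil.
rewrite big_cons -IH -ExD //; last exact: Int_sum.
by apply: Ex_ext => w; rewrite big_cons.
Qed.
Lemma L2_sum (I : Type) (r : seq I) (F : I -> T -> R) : (forall i, L2 (F i)) ->
  L2 (fun w => \sum_(i <- r) F i w).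
Proof.
move=> h; elim: r => [|i r IH].
  have -> : (fun w => \sum_(i <- [::]) F i w) = (fun _ => 0) by apply/funext => w; rewrite big_nil.
  exact: L20.
have -> : (fun w => \sum_(j <- i :: r) F j w) = (fun w => 1 * F i w + \sum_(j <- r) F j w).
  by apply/funext => w; rewrite big_cons mul1r.
exact: L2lin.
Qed.
Lemma L2Z c f : L2 f -> L2 (fun w => c * f w).
Proof. move=> h. have := @L2lin c _ _ h L20.

 by have -> : (fun w => c * f w + 0) = (fun w => c * f w) by apply/funext => w; rewrite addr0. Qed.
Lemma L2B f g : L2 f -> L2 g -> L2 (fun w => f w - g w).
Proof. move=> hf hg. have := @L2lin (-1) _ _ hg hf.
 by have -> : (fun w => -1 * g w + f w) = (fun w => f w - g w) by apply/funext => w; rewrite mulN1r addrC. Qed.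
Definition Gram {Ix K : finType} (c : R) (phi : Ix -> T -> K -> R) (i j : Ix) : R :=
  Ex P (fun w => c * \sum_k phi i w k * phi j w k).
Definition L2s {Ix K : finType} (phi : Ix -> T -> K -> R) := forall i k, L2 (fun w => phi i w k).
Lemma Int_gram (Ix K : finType) (c : R) (phi : Ix -> T -> K -> R) i j : L2s phi ->
  Int (fun w => c * \sum_k phi i w k * phi j w k).
Proof. move=> h; apply: IntZ; apply: Int_sum => k; exact: L2M. Qed.
Lemma Ex_lin2 (Ix : finType) (a : Ix -> Ix -> R) (F : Ix -> Ix -> T -> R) :
  (forall i j, Int (F i j)) ->
  \sum_i \sum_j a i j * Ex P (F i j) = Ex P (fun w => \sum_i \sum_j a i j * F i j w).
Proof.
move=> h; rewrite Ex_sum; last by move=> i; apply: Int_sum => j; exact: IntZ.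
apply: eq_bigr => i _; rewrite Ex_sum; last by move=> j; exact: IntZ.
by apply: eq_bigr => j _; rewrite ExZ.
Qed.
Lemma sum_prod (Ix : finType) (A B : Ix -> R) :
  (\sum_i A i) * (\sum_j B j) = \sum_i \sum_j A i * B j.
Proof. by rewrite mulr_suml; apply: eq_bigr => i _; rewrite mulr_sumr. Qed.
Lemma swap_k (Ix K : finType) (a : Ix -> Ix -> R) (b : Ix -> K -> R) c :
  \sum_i \sum_j a i j * (c * \sum_k b i k * b j k) =
  c * \sum_k \sum_i \sum_j b i k * b j k * a i j.
Proof.
transitivity (\sum_i \sum_j \sum_k c * (b i k * b j k * a i j)).
  apply: eq_bigr => i _; apply: eq_bigr => j _.
  rewrite mulr_sumr mulr_sumr; apply: eq_bigr => k _; ring.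
rewrite mulr_sumr; under eq_bigr do rewrite exchange_big /=.
rewrite exchange_big /=; apply: eq_bigr => k _.
rewrite mulr_sumr; apply: eq_bigr => i _.
by rewrite mulr_sumr.
Qed.
Lemma gram_psd (Ix K : finType) (c : R) (phi : Ix -> T -> K -> R) (u : Ix -> R) :
  0 <= c -> L2s phi -> 0 <= \sum_i \sum_j u i * u j * Gram c phi i j.
Proof.
move=> c0 h; rewrite /Gram Ex_lin2; last by move=> i j; exact: Int_gram.
apply: Ex_ge0 => w; rewrite swap_k; apply: mulr_ge0 => //.
apply: sumr_ge0 => k _.
have -> : \sum_i \sum_j phi i w k * phi j w k * (u i * u j) =
   (\sum_i u i * phi i w k) * (\sum_j u j * phi j w k).
  rewrite sum_prod; apply: eq_bigr => i _; apply: eq_bigr => j _.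
  ring.
by rewrite -expr2 sqr_ge0.
Qed.
Lemma schur (Ix K1 K2 : finType) (c1 c2 : R) (phi : Ix -> T -> K1 -> R) (psi : Ix -> T -> K2 -> R)
  (x : Ix -> R) : 0 <= c1 -> 0 <= c2 -> L2s phi -> L2s psi ->
  0 <= \sum_i \sum_j x i * x j * (Gram c1 phi i j * Gram c2 psi i j).
Proof.
move=> c10 c20 h1 h2.
have -> : \sum_i \sum_j x i * x j * (Gram c1 phi i j * Gram c2 psi i j) =
   \sum_i \sum_j (x i * x j * Gram c2 psi i j) * Gram c1 phi i j.
  apply: eq_bigr => i _; apply: eq_bigr => j _.
  by rewrite [Gram c1 _ _ _ * _]mulrC mulrA.
rewrite /Gram Ex_lin2; last by move=> i j; exact: Int_gram.
apply: Ex_ge0 => w; rewrite swap_k; apply: mulr_ge0 => //.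
apply: sumr_ge0 => k _.
have := @gram_psd _ _ _ _ (fun i => x i * phi i w k) c20 h2.
congr (0 <= _); apply: eq_bigr => i _; apply: eq_bigr => j _.
rewrite /Gram; ring.
Qed.
Lemma cen (n : nat) (A B : 'I_n -> R) (x y : R) :
  \sum_k (A k - x) * (B k - y) =
  \sum_k A k * B k - x * \sum_k B k - y * \sum_k A k + n%:R * x * y.
Proof.
transitivity (\sum_k (A k * B k + (- (x * B k)) + (- (y * A k)) + x * y)).
  by apply: eq_bigr => k _; ring.
rewrite !big_split /= !sumrN -!mulr_sumr sumr_const card_ord mulr_natl; ring.
Qed.
Section Core.
Variables (Ix : finType) (N : nat) (al : Ix -> T -> 'I_N -> R)
  (ga : Ix -> 'I_N -> T -> 'I_N -> R).
Hypothesis hal : forall I n, L2 (fun w => al I w n).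
Hypothesis hga : forall I n m, L2 (fun w => ga I n w m).
Hypothesis N0 : (0 < N)%N.

Definition Xv I J := Ex P (fun w => EnN (fun n => al I w n * al J w n)).
Definition Yv I J := Ex P (fun w => EnN (fun n => \sum_m ga I n w m * ga J n w m)).
Definition X'v I J := Ex P (fun w => EnN (fun n => al I w n) * EnN (fun n => al J w n)).
Definition Y''v I J := Ex P (fun w => EnN (fun n => (\sum_m ga I n w m) * (\sum_m ga J n w m))).
Definition Mv I J := Xv I J * Yv I J + (maxn (N - 1) 1)%:R^-1 *
  ((N%:R * X'v I J - Xv I J) * (Y''v I J - Yv I J)).

Definition gp I w (p : 'I_N * 'I_N) := ga I p.1 w p.2.
Definition mu I w (_ : 'I_1) := EnN (fun n => al I w n).
Definition sg I w n := \sum_m ga I n w m.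
Definition ca I w n := al I w n - EnN (fun n => al I w n).
Definition cg2 I w n m := ga I n w m - N%:R^-1 * \sum_m' ga I n w m'.
Definition cg I w (p : 'I_N * 'I_N) := cg2 I w p.1 p.2.

Lemma L2s_al : L2s al. Proof. by move=> I n; exact: hal. Qed.
Lemma L2s_gp : L2s gp. Proof. by move=> I [n m]; exact: hga. Qed.
Lemma L2s_mu : L2s mu.
Proof. move=> I k; apply: L2Z; apply: L2_sum => n; exact: hal. Qed.
Lemma L2s_sg : L2s sg. Proof. move=> I n; apply: L2_sum => m; exact: hga. Qed.
Lemma L2s_ca : L2s ca.
Proof. move=> I n; apply: L2B => //; apply: L2Z; apply: L2_sum => n'; exact: hal. Qed.
Lemma L2s_cg : L2s cg.
Proof. move=> I [n m]; apply: L2B => //; apply: L2Z; apply: L2_sum => m'; exact: hga. Qed.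

Lemma NR0 : N%:R != 0 :> R.
Proof. by rewrite pnatr_eq0 -lt0n. Qed.

Lemma Xv_gram I J : Xv I J = Gram N%:R^-1 al I J. Proof. by []. Qed.
Lemma Y''v_gram I J : Y''v I J = Gram N%:R^-1 sg I J. Proof. by []. Qed.
Lemma Yv_gram I J : Yv I J = Gram N%:R^-1 gp I J.
Proof. apply: Ex_ext => w; rewrite /EnN /gp; congr (_ * _); exact: pair_bigA. Qed.
Lemma X'v_gram I J : X'v I J = Gram 1 mu I J.
Proof. by apply: Ex_ext => w; rewrite big_ord1 mul1r. Qed.

Lemma F1 I J : Xv I J = Gram N%:R^-1 ca I J + X'v I J.
Proof.
rewrite X'v_gram /Gram -ExD; try exact: Int_gram L2s_ca; try exact: Int_gram L2s_mu.
apply: Ex_ext => w; rewrite big_ord1 mul1r /ca /mu /EnN cen.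
have := NR0; move: (N%:R : R) => r r0. field => //.
Qed.
Lemma cg_n I J w n : \sum_m cg2 I w n m * cg2 J w n m =
  \sum_m ga I n w m * ga J n w m - N%:R^-1 * (sg I w n * sg J w n).
Proof. rewrite /cg2 cen /sg. have := NR0; move: (N%:R : R) => r r0. field => //. Qed.

Lemma F2 I J : (1 < N)%N ->
  N%:R * Yv I J - Y''v I J = (N%:R - 1) * Gram (N%:R - 1)^-1 cg I J.
Proof.
move=> N1.
have N10 : (N%:R - 1 : R) != 0.
  by rewrite subr_eq0 -[1 : R]/(1%:R) eqr_nat; apply/eqP => E; rewrite E in N1.
rewrite Yv_gram Y''v_gram /Gram -ExZ; last by apply: Int_gram; exact: L2s_gp.
rewrite -ExB; [|by apply: IntZ; apply: Int_gram; exact: L2s_gp|by apply: Int_gram; exact: L2s_sg].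
rewrite -ExZ; last by apply: Int_gram; exact: L2s_cg.
apply: Ex_ext => w.
rewrite (mulVKf N10) (mulVKf NR0).
rewrite /gp /cg -(pair_bigA _ (fun n m => ga I n w m * ga J n w m)).
rewrite -(pair_bigA _ (fun n m => cg2 I w n m * cg2 J w n m)) /=.
rewrite mulr_sumr -sumrB; apply: eq_bigr => n _.
by rewrite cg_n.
Qed.
Lemma sum1 (n0 : 'I_N) (F : 'I_N -> R) : N = 1%N -> \sum_n F n = F n0.
Proof.
move=> N1; have E : forall n : 'I_N, n = n0.
  move=> n; apply/val_inj.
  have h1 : (val n < 1)%N by rewrite -N1; exact: ltn_ord.
  have h2 : (val n0 < 1)%N by rewrite -N1; exact: ltn_ord.
  by move: h1 h2; rewrite !ltnS !leqn0 => /eqP -> /eqP ->.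
rewrite (eq_bigr (fun _ => F n0)); last by move=> n _; rewrite (E n).
by rewrite sumr_const card_ord N1 mulr1n.
Qed.
Lemma EnN1 (n0 : 'I_N) (F : 'I_N -> R) : N = 1%N -> EnN F = F n0.
Proof. by move=> N1; rewrite /EnN (sum1 n0 _ N1) N1 invr1 mul1r. Qed.

Lemma core_psd (x : Ix -> R) : 0 <= \sum_I \sum_J x I * x J * Mv I J.
Proof.
have c0 : 0 <= N%:R^-1 :> R by rewrite invr_ge0 ler0n.
have [N1|N2] := eqVneq N 1%N.
  pose n0 := Ordinal N0.
  have EX I J : X'v I J = Xv I J.
    by apply: Ex_ext => w; rewrite !(EnN1 n0 _ N1).
  have EY I J : Y''v I J = Yv I J.
    by apply: Ex_ext => w; rewrite !(EnN1 n0 _ N1) !(sum1 n0 _ N1).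
  have -> : \sum_I \sum_J x I * x J * Mv I J =
     \sum_I \sum_J x I * x J * (Gram N%:R^-1 al I J * Gram N%:R^-1 gp I J).
    apply: eq_bigr => I _; apply: eq_bigr => J _.
    by rewrite /Mv EX EY subrr !mulr0 addr0 Yv_gram Xv_gram.
  by apply: schur => //; exact: L2s_gp.
have N1 : (1 < N)%N by rewrite ltn_neqAle eq_sym N2 N0.
have N10 : (N%:R - 1 : R) != 0.
  by rewrite subr_eq0 -[1 : R]/(1%:R) eqr_nat; apply/eqP => E; rewrite E in N1.
have c1 : 0 <= (N%:R - 1)^-1 :> R.
  by rewrite invr_ge0 subr_ge0 -[1 : R]/(1%:R) ler_nat ltnW.
have km : (maxn (N - 1) 1)%:R = N%:R - 1 :> R.
  rewrite (maxn_idPl _); last by rewrite leq_subRL ?addn1 // ltnW.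
  by rewrite natrB // ltnW.
have -> : \sum_I \sum_J x I * x J * Mv I J =
   \sum_I \sum_J x I * x J * (Gram N%:R^-1 ca I J * Gram (N%:R - 1)^-1 cg I J) +
   \sum_I \sum_J x I * x J * (Gram 1 mu I J * Gram N%:R^-1 sg I J).
  rewrite -big_split; apply: eq_bigr => I _; rewrite -big_split; apply: eq_bigr => J _.
  rewrite /= -mulrDr; congr (_ * _).
  have e1 := F1 I J; have e2 := F2 I J N1.
  rewrite -X'v_gram -Y''v_gram /Mv km.
  move: e1 e2; rewrite -/(Xv I J) -/(Yv I J) -/(X'v I J) -/(Y''v I J).
  move: (Xv I J) (Yv I J) (X'v I J) (Y''v I J) (Gram _ ca I J) (Gram _ cg I J) => X Y X' Y'' D Z.
  move=> -> e2.
  have -> : Y'' = N%:R * Y - (N%:R - 1) * Z by rewrite -e2; ring.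
  by field.
apply: addr_ge0; apply: schur => //;
  [exact: L2s_ca|exact: L2s_cg|exact: L2s_mu|exact: L2s_sg].
Qed.
Lemma Mv_sym I J : Mv I J = Mv J I.
Proof.
have EX : Xv I J = Xv J I.
  by apply: Ex_ext => w; congr EnN; apply/funext => n; rewrite mulrC.
have EY : Yv I J = Yv J I.
  apply: Ex_ext => w; congr EnN; apply/funext => n.
  by apply: eq_bigr => m _; rewrite mulrC.
have EX' : X'v I J = X'v J I by apply: Ex_ext => w; rewrite mulrC.
have EY' : Y''v I J = Y''v J I by apply: Ex_ext => w; congr EnN; apply/funext => n; rewrite mulrC.
by rewrite /Mv EX EY EX' EY'.
Qed.
End Core.
End S.


Theorem theorem3 (d : measure_display) (T : measurableType d) (R : realType)
  (P : probability T R) (L N : nat) (C : nat -> nat)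
  (a : forall l : 'I_L, T -> 'M[R]_(C l + 1, N))
  (g : 'I_N -> forall l : 'I_L, T -> 'M[R]_(C l.+1, N)) :
  (0 < N)%N ->
  (forall l : 'I_L, sq_integrable_mx P (a l)) ->
  (forall (n : 'I_N) (l : 'I_L), sq_integrable_mx P (g n l)) ->
  (forall (l : 'I_L) (w : T) (n : 'I_N), a l w (rshift (C l) ord0) n = 1) ->
  psd (theorem3_matrix P a g).
Proof.
move=> N0 ha hg _.
pose Kd := (\sum_(l < L) ((C l + 1) * C l.+1))%N.
pose lI (I : 'I_Kd) : 'I_L := tagnat.sig1 I.
pose bI (I : 'I_Kd) := (mxtens_unindex (tagnat.sig2 I)).1.
pose iI (I : 'I_Kd) := (mxtens_unindex (tagnat.sig2 I)).2.
pose al (I : 'I_Kd) (w : T) (n : 'I_N) : R := a (lI I) w (bI I) n.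
pose ga (I : 'I_Kd) (n : 'I_N) (w : T) (m : 'I_N) : R := g n (lI I) w (iI I) m.
have entry (I J : 'I_Kd) : theorem3_matrix P a g I J = Mv P _ _ al ga I J.
  by rewrite /theorem3_matrix /khatri_rao !mxE.
have hal : forall I n, L2 P (fun w => al I w n).
  by move=> I n; apply: sq_L2; exact: ha.
have hga : forall I n m, L2 P (fun w => ga I n w m).
  by move=> I n m; apply: sq_L2; exact: hg.
have EM : theorem3_matrix P a g = \matrix_(I, J) Mv P _ _ al ga I J.
  by apply/matrixP => I J; rewrite entry mxE.
rewrite EM; split.
  by apply/matrixP => I J; rewrite !mxE Mv_sym.
move=> x.
have -> : (x^T *m (\matrix_(I, J) Mv P _ _ al ga I J) *m x) 0 0 =
    \sum_I \sum_J x I 0 * x J 0 * Mv P _ _ al ga I J.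
  rewrite mxE; under eq_bigr do rewrite mxE mulr_suml.
  rewrite exchange_big /=; apply: eq_bigr => I _; apply: eq_bigr => J _.
  by rewrite !mxE; ring.
exact: core_psd.
Qed.
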